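(* Consider the following finite dynamic game. There is a finite set of players $\mathcal{I}$ and times $t\in\{1,\dots,T\}$. Each player $i$ has a local state $X_t^i$ (in a finite set $\mathcal{X}_t^i$), $X_t=(X_t^i)_i$, and a local noise process $W_t^i$; players have no initial information. At each time every player $i$ chooses $U_t^i$ (finite set), $U_t=(U_t^i)_i$, and $(X_{t+1}^i,Y_t^i)=f_t^i(X_t^i,U_t,W_t^i)$ for fixed functions $f_t^i$, where $Y_t^i$ is a public observation (finite set), $Y_t=(Y_t^i)_i$. Player $i$'s information at time $t$ is $H_t^i=(Y_{1:t-1},U_{1:t-1},X_{1:t}^i)$, and all of $(X_1^i)_{i}$, $(W_t^i)_{i,t}$ are mutually independent. Then for each player $i$ and time $t$ there exist functions $\xi_t^{g^i}$, depending on the strategy profile only through $g^i$, mapping $(y_{1:t-1},u_{1:t-1})$ to a distribution on $\mathcal{X}_1^i\times\cdots\times\mathcal{X}_t^i$, such that $$\Pr^g(x_{1:t}\mid y_{1:t-1},u_{1:t-1})=\prod_{i\in\mathcal{I}}\xi_t^{g^i}(x_{1:t}^i\mid y_{1:t-1},u_{1:t-1})$$ for all behavioral strategy profiles $g$ and all $(y_{1:t-1},u_{1:t-1})$ with positive probability under $g$.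
   Context: A behavioral strategy $g^i=(g_t^i)_t$ of player $i$ maps each realization of $H_t^i$ to a probability distribution over player $i$'s actions at time $t$; $\Pr^g$ denotes probability under the profile $g=(g^i)_{i\in\mathcal{I}}$. *)

(* Defs.v *)
From HB Require Import structures.
From mathcomp Require Import all_boot all_order all_algebra.
Set Implicit Arguments. Unset Strict Implicit. Unset Printing Implicit Defensive.
Import Order.TTheory GRing.Theory Num.Theory.
Local Open Scope ring_scope.

(* Time is 0-based: index s here corresponds to time s+1 in the paper. *)

Lemma leq_ord_S n (s : 'I_n) : (s.+1 <= n.+1)%N.
Proof. by rewrite ltnS ltnW. Qed.
Lemma ltn_ord_S n (s : 'I_n) : (s.+1 < n.+1)%N.
Proof. by rewrite ltnS. Qed.
Lemma leq_ord n (s : 'I_n) : (s <= n)%N.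
Proof. exact: ltnW. Qed.

Section Game.
Variable R : realFieldType.
Variable I : finType.
Variables X U Y W : I -> nat -> finType.

Definition is_distr (A : finType) (p : A -> R) :=
  (forall a, 0 <= p a) /\ \sum_a p a = 1.

Definition XS (i : I) (n : nat) := {dffun forall k : 'I_n, X i k}.
Definition PU (n : nat) := {dffun forall k : 'I_n, {dffun forall j : I, U j k}}.
Definition PY (n : nat) := {dffun forall k : 'I_n, {dffun forall j : I, Y j k}}.

Definition restrX (i : I) m n (le : (n <= m)%N) (x : XS i m) : XS i n :=
  [ffun k : 'I_n => x (widen_ord le k)].
Definition restrU m n (le : (n <= m)%N) (u : PU m) : PU n :=
  [ffun k : 'I_n => u (widen_ord le k)].
Definition restrY m n (le : (n <= m)%N) (y : PY m) : PY n :=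
  [ffun k : 'I_n => y (widen_ord le k)].

(* behavioral strategy of player i: at time s, given
   H_s^i = (y_{0:s-1}, u_{0:s-1}, x^i_{0:s}), a weight on each action *)
Definition Strat (i : I) :=
  forall s : nat, PY s -> PU s -> XS i s.+1 -> U i s -> R.

Definition is_strat (T : nat) (i : I) (gi : Strat i) :=
  forall s : nat, (s < T)%N ->
    forall py pu xs, is_distr (gi s py pu xs).

Section Dynamics.
Variable f : forall (i : I) (s : nat),
    X i s -> {dffun forall j : I, U j s} -> W i s -> (X i s.+1 * Y i s)%type.
Variable PX1 : forall i : I, X i 0%N -> R.
Variable PW : forall (i : I) (s : nat), W i s -> R.

(* transition kernel induced by the local noise:
   Pr(X_{s+1}^i = x', Y_s^i = y' | X_s^i = xs, U_s = us) *)
Definition PK (i : I) (s : nat) (xs : X i s) (us : {dffun forall j : I, U j s})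
    (x' : X i s.+1) (y' : Y i s) : R :=
  \sum_(w : W i s | f xs us w == (x', y')) PW w.

(* Pr^g(x_{0:t}, y_{0:t-1}, u_{0:t-1}), with X_1^i, W_s^i mutually independent
   and actions drawn according to the behavioral strategies *)
Definition joint (g : forall i, Strat i) (t : nat)
    (x : {dffun forall i : I, XS i t.+1}) (py : PY t) (pu : PU t) : R :=
  (\prod_(i : I) PX1 (x i ord0)) *
  \prod_(s < t)
    ((\prod_(i : I) g i s (restrY (leq_ord s) py) (restrU (leq_ord s) pu)
                      (restrX (leq_ord_S s) (x i)) (pu s i)) *
     (\prod_(i : I) PK (x i (widen_ord (leqnSn t) s)) (pu s)
                      (x i (@Ordinal t.+1 s.+1 (ltn_ord_S s))) (py s i))).

Definition pubprob (g : forall i, Strat i) (t : nat) (py : PY t) (pu : PU t) : R :=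
  \sum_(x : {dffun forall i : I, XS i t.+1}) joint g x py pu.

Definition condprob (g : forall i, Strat i) (t : nat)
    (x : {dffun forall i : I, XS i t.+1}) (py : PY t) (pu : PU t) : R :=
  joint g x py pu / pubprob g py pu.

End Dynamics.
End Game.

(* Main.v *)
Require Import Defs.
From HB Require Import structures.
From mathcomp Require Import all_boot all_order all_algebra.
Import Order.TTheory GRing.Theory Num.Theory.
Local Open Scope ring_scope.

Lemma prod_sum_dffun (R : comNzRingType) (I : finType) (T_ : I -> finType)
  (F : forall i, T_ i -> R) :
 \prod_i \sum_(j : T_ i) F i j = \sum_(x : {dffun forall i, T_ i}) \prod_i F i (x i).
Proof.
pose P_ := fun i => [ffun j : T_ i => F i j].
transitivity (\prod_i \sum_(j : T_ i) P_ i j).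
  by apply: eq_bigr => i _; apply: eq_bigr => j _; rewrite ffunE.
under eq_bigr do rewrite (big_tag (fun i => P_ i)).
rewrite bigA_distr_big_dep -(@big_fprod _ _ _ _ _ _ _ P_).
rewrite (reindex (@fprod_of_dffun I T_)); last exact/onW_bij/fprod_of_dffun_bij.
apply: eq_bigr => x _; apply: eq_bigr => i _.
by rewrite /P_ ffunE /fprod_of_dffun fprodE.
Qed.

Section S.
Variable R : realFieldType.
Variable I : finType.
Variables X U Y W : I -> nat -> finType.
Variable f : forall (i : I) (s : nat),
        X i s -> {dffun forall j : I, U j s} -> W i s -> (X i s.+1 * Y i s)%type.
Variable PX1 : forall i : I, X i 0%N -> R.
Variable PW : forall (i : I) (s : nat), W i s -> R.
Variable t : nat.

Definition J {i : I} (gi : Strat R X U Y i) (py : PY Y t) (pu : PU U t)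
  (xi : XS X i t.+1) : R :=
  PX1 i (xi ord0) *
  \prod_(s < t)
    (gi s (restrY (Defs.leq_ord s) py) (restrU (Defs.leq_ord s) pu)
        (restrX (leq_ord_S s) xi) (pu s i) *
     PK f PW (xi (widen_ord (leqnSn t) s)) (pu s)
        (xi (@Ordinal t.+1 s.+1 (ltn_ord_S s))) (py s i)).

Lemma joint_factor g x py pu :
  joint f PX1 PW g x py pu = \prod_i J (g i) py pu (x i).
Proof.
rewrite /joint /J [RHS]big_split /=; congr (_ * _).
rewrite [RHS]exchange_big /=; apply: eq_bigr => s _; by rewrite big_split.
Qed.

Lemma pubprob_factor g py pu :
  pubprob f PX1 PW g py pu = \prod_i \sum_xi J (g i) py pu xi.
Proof.
rewrite prod_sum_dffun /pubprob; apply: eq_bigr => x _; exact: joint_factor.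
Qed.

End S.
Arguments J {R I X U Y W} f PX1 PW {t i} gi py pu xi.


Theorem lemma12 (R : realFieldType) (I : finType) (T : nat)
  (X U Y W : I -> nat -> finType)
  (f : forall (i : I) (s : nat),
        X i s -> {dffun forall j : I, U j s} -> W i s -> (X i s.+1 * Y i s)%type)
  (PX1 : forall i : I, X i 0%N -> R)
  (PW : forall (i : I) (s : nat), W i s -> R)
  (hX1 : forall i : I, is_distr (PX1 i))
  (hW : forall (i : I) (s : nat), is_distr (PW i s))
  (t : nat) (ht : (t < T)%N) :
  exists Xi : forall i : I, Strat R X U Y i -> PY Y t -> PU U t -> XS X i t.+1 -> R,
    (forall (i : I) (gi : Strat R X U Y i) (py : PY Y t) (pu : PU U t),
        is_distr (Xi i gi py pu)) /\
    (forall g : forall i : I, Strat R X U Y i,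
        (forall i : I, is_strat T (g i)) ->
        forall (py : PY Y t) (pu : PU U t),
          0 < pubprob f PX1 PW g py pu ->
          forall x : {dffun forall i : I, XS X i t.+1},
            condprob f PX1 PW g x py pu = \prod_(i : I) Xi i (g i) py pu (x i)).
Proof.
have inh : forall (A : finType) (p : A -> R), is_distr p -> exists a : A, xpredT a.
  move=> A p [_ hs]; case: (pickP (xpredT : pred A)) => [a _|none]; first by exists a.
  by move: hs; rewrite big_pred0 // => /eqP; rewrite eq_sym oner_eq0.
have ne : forall i (pu : PU U t), exists x : XS X i t.+1, xpredT x.
  move=> i pu.
  have H : forall k, (k <= t)%N -> exists x : X i k, xpredT x.
    elim=> [|k IH] hk; first exact: (inh _ _ (hX1 i)).
    have [x _] := IH (ltnW hk).
    have [w _] := inh _ _ (hW i k).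
    by exists (f i k x (pu (Ordinal hk)) w).1.
  by exists [ffun k : 'I_t.+1 => xchoose (H k (ltnSE (ltn_ord k)))].
pose a0 i pu := xchoose (ne i pu).
pose Z := fun (i : I) (gi : Strat R X U Y i) (py : PY Y t) (pu : PU U t) => \sum_z J f PX1 PW gi py pu z.
pose good := fun (i : I) (gi : Strat R X U Y i) (py : PY Y t) (pu : PU U t) => [forall z, 0 <= J f PX1 PW gi py pu z] && (Z i gi py pu != 0).
exists (fun i gi py pu xi => if good i gi py pu then J f PX1 PW gi py pu xi / Z i gi py pu
                             else (xi == a0 i pu)%:R).
split.
  move=> i gi py pu; case: (boolP (good i gi py pu)) => [/andP[/forallP hJ hZ]|_]; split.
  - move=> a; apply: divr_ge0 => //; exact: sumr_ge0.
  - by rewrite -mulr_suml divff.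
  - by move=> a; exact: ler0n.
  - rewrite (bigD1 (a0 i pu)) //= eqxx big1 ?addr0 // => a /negbTE ->; done.
move=> g hg py pu hpos x.
have hgood : forall i, good i (g i) py pu.
  move=> i; apply/andP; split.
    apply/forallP => z; rewrite /J; apply: mulr_ge0; first by case: (hX1 i).
    apply: prodr_ge0 => s _; apply: mulr_ge0.
      by case: (hg i s (ltn_trans (ltn_ord s) ht) (restrY (Defs.leq_ord s) py)
                   (restrU (Defs.leq_ord s) pu) (restrX (leq_ord_S s) (z))).
    by rewrite /PK; apply: sumr_ge0 => w _; case: (hW i s).
  apply/eqP => Z0; move: hpos; rewrite pubprob_factor (bigD1 i) //=.
  by rewrite -/(Z i (g i) py pu) Z0 mul0r ltxx.
under eq_bigr do rewrite hgood.
by rewrite prodf_div /condprob joint_factor pubprob_factor.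
Qed.
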